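(* Let $q$ be a prime power, let $n>1$ and $k\ge 1$ with $\gcd(n,k)=1$, and let $f(x)$ be an irreducible polynomial of degree $n$ over $\mathbb{F}_q$. Let $\alpha,\beta\in\mathbb{F}_{q^k}$ with $\alpha\neq 0$, and write $g(x)=f(\alpha x+\beta)=\sum_{i=0}^{n} g_i x^i$. Then $\mathbb{F}_q(g_0,g_1,\ldots,g_n)=\mathbb{F}_{q^k}$ if and only if $\mathbb{F}_q(\alpha,\beta)=\mathbb{F}_{q^k}$.
   Context: For elements $a_1,\dots,a_r$ of a finite extension of $\mathbb{F}_q$, $\mathbb{F}_q(a_1,\ldots,a_r)$ denotes the smallest field containing $\mathbb{F}_q$ and all $a_i$; equivalently, $\mathbb{F}_q(a_1,\dots,a_r)=\mathbb{F}_{q^k}$ (with all $a_i\in\mathbb{F}_{q^k}$) means that for every proper divisor $v$ of $k$ some $a_i\notin\mathbb{F}_{q^v}$. *)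

(* Defs.v *)
From HB Require Import structures.
From mathcomp Require Import all_boot all_order all_algebra all_field.
Set Implicit Arguments. Unset Strict Implicit. Unset Printing Implicit Defensive.
Import GRing.Theory.
Local Open Scope ring_scope.

Definition gen_field (F : fieldType) (L : fieldExtType F) (xs : seq L)
  : {vspace L} := <<1%VS & xs>>%VS.

(* Main.v *)
Require Import Defs.
From HB Require Import structures.
From mathcomp Require Import all_boot all_order all_algebra all_field.
Import GRing.Theory.
Local Open Scope ring_scope.

Module Aux.
Set Implicit Arguments. Unset Strict Implicit. Unset Printing Implicit Defensive.


Section S.
Variables (F : finFieldType) (L : fieldExtType F).
Local Notation q := #|F|.

Lemma frobL (x : L) : x ^+ (q ^ \dim {:L}) = x.
Proof. by apply/eqP; rewrite -(Fermat's_little_theorem (fullv%AS)) memvf. Qed.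

Lemma frob1 (x : L) : (x \in 1%VS) = (x ^+ q == x).
Proof. by rewrite (Fermat's_little_theorem 1%AS) dimv1 expn1. Qed.

Lemma pcharF : {p | prime p & (p \in [pchar L]) /\ exists r, q = (p ^ r)%N}.
Proof.
have [p pp pcharFp] := finPcharP F; exists p => //; split.
  by rewrite (pchar_lalg L).
by exists (logn p q); exact: (card_pprimeChar pcharFp).
Qed.

Lemma qnat_poly m : [pchar {poly L}].-nat (q ^ m)%N.
Proof.
have [p pp [pc [r ->]]] := pcharF.
have pc' : p \in [pchar {poly L}] by rewrite pchar_poly.
by rewrite (eq_pnat _ (pcharf_eq pc')) -expnM pnatX pnat_id.
Qed.

Lemma qnat m : [pchar L].-nat (q ^ m)%N.
Proof.
have [p pp [pc [r ->]]] := pcharF.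
by rewrite (eq_pnat _ (pcharf_eq pc)) -expnM pnatX pnat_id.
Qed.
End S.

Lemma dim_root (F : fieldType) (E : fieldExtType F) (f : {poly F}) (t : E) :
  irreducible_poly f -> root (map_poly (in_alg E) f) t ->
  \dim <<1; t>>%VS = (size f).-1.
Proof.
move=> irr rt.
have /polyOver1P [h Dh] := minPolyOver 1 t.
have dv := minPoly_dvdp (alg_polyOver 1%AS f) rt.
rewrite Dh dvdp_map in dv.
have szh : size h = (adjoin_degree 1 t).+1 by rewrite -size_minPoly Dh size_map_poly.
have /eqp_size : h %= f by apply: irr.2 => //; rewrite szh.
by rewrite szh dim_Fadjoin dimv1 muln1 => <-.
Qed.

Lemma irr_dvd_frob (F : finFieldType) (f : {poly F}) :
  irreducible_poly f -> f %| 'X^(#|F| ^ (size f).-1) - 'X.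
Proof.
move=> irr; have nzf : f != 0 by rewrite -size_poly_gt0 ltnW // irr.1.
have [M [rs Hrs _]] := FinSplittingFieldFor nzf.
set fM := map_poly _ f in Hrs.
have szfM : size fM = size f by rewrite size_map_poly.
have [t trs] : exists t, t \in rs.
  case: rs Hrs => [|t rs] H; last by exists t; rewrite mem_head.
  move/eqp_size: H; rewrite big_nil size_poly1 szfM => H.
  by move: irr.1; rewrite H.
have rt : root fM t by rewrite (eqp_root Hrs) root_prod_XsubC.
have dimt := dim_root irr rt.
have tq : t ^+ (#|F| ^ (size f).-1) = t.
  by apply/eqP; rewrite -dimt -(Fermat's_little_theorem <<1; t>>%AS) memv_adjoin.
set P := 'X^_ - 'X.
have rg : root (map_poly (in_alg M) (gcdp f P)) t.
  rewrite gcdp_map root_gcd rt /= rmorphB /= map_polyXn map_polyX.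
  by rewrite rootE !hornerE tq subrr.
have nzg : gcdp f P != 0 by rewrite gcdp_eq0 negb_and nzf.
have := root_size_gt1 _ rg; rewrite map_poly_eq0 size_map_poly => /(_ nzg) sz.
have /eqp_dvdl <- : gcdp f P %= f.
  by apply: irr.2; [rewrite neq_ltn sz orbT | exact: dvdp_gcdl].
exact: dvdp_gcdr.
Qed.

Lemma grp (V : zmodType) (A B C w w' : V) : B - C + (w - w') = (A + w - (C + w')) - (A - B).
Proof.
rewrite [in RHS]opprB [in RHS]addrC [in RHS]addrA (addrA (B - A)) subrK opprD.
by rewrite addrACA.
Qed.

Section Main.
Variables (F : finFieldType) (L : fieldExtType F) (n : nat) (f : {poly F}).
Hypotheses (n_gt1 : (1 < n)%N) (cop : coprime n (\dim {:L}))
  (irr : irreducible_poly f) (szf : size f = n.+1).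
Local Notation q := #|F|.
Local Notation k := (\dim {:L}).
Local Notation fL := (map_poly (in_alg L) f).

Lemma szfL : size fL = n.+1.
Proof. by rewrite size_map_poly. Qed.

Lemma k_gt0 : (0 < k)%N.
Proof. by rewrite adim_gt0. Qed.

Lemma noroot c : ~~ root fL c.
Proof.
apply/negP => rc; have := dim_root irr rc; rewrite szf /= => dc.
have := field_dimS (subvf <<1; c>>%AS); rewrite dc => dvd.
by move: cop n_gt1; rewrite /coprime (gcdn_idPl dvd) => /eqP ->.
Qed.

Lemma fL_frob : fL %| 'X^(q ^ n) - 'X.
Proof.
have := irr_dvd_frob irr; rewrite szf /= -(dvdp_map (in_alg L)).
by rewrite rmorphB /= map_polyXn map_polyX.
Qed.

Lemma dvd_pow (A B : {poly L}) N : fL %| A - B -> fL %| A ^+ N - B ^+ N.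
Proof. by move=> h; rewrite subrXX dvdp_mulr. Qed.

Lemma fL_frobm m : fL %| 'X^(q ^ (m * n)) - 'X.
Proof.
elim: m => [|m IH]; first by rewrite mul0n expn0 expr1 subrr dvdp0.
rewrite mulSn expnD exprM.
have -> : ('X^(q ^ n)) ^+ (q ^ (m * n)) - 'X =
   (('X^(q ^ n)) ^+ (q ^ (m * n)) - 'X ^+ (q ^ (m * n))) + ('X^(q ^ (m * n)) - 'X) :> {poly L}.
  by rewrite addrA subrK.
by rewrite dvdp_add // dvd_pow // fL_frob.
Qed.

Lemma frobL_pow (x : L) m : x ^+ (q ^ (m * k)) = x.
Proof.
elim: m => [|m IH]; first by rewrite mul0n expn0 expr1.
by rewrite mulSn expnD exprM frobL IH.
Qed.

Lemma qnat_poly1 : [pchar {poly L}].-nat q.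
Proof. by have := qnat_poly L 1; rewrite expn1. Qed.

Lemma indep a b : fL %| 'X^q * a%:P + b%:P -> a = 0 /\ b = 0.
Proof.
have [-> | an0] := eqVneq a 0.
  rewrite polyC0 mulr0 add0r => h; split=> //; apply/eqP/negPn/negP => bn0.
  have := dvdp_leq (p := fL) (q := b%:P); rewrite polyC_eq0 bn0 => /(_ isT h).
  by rewrite size_polyC bn0 szfL ltnS leqn0 => /eqP n0; move: n_gt1; rewrite n0.
set c := (b / a) ^+ (q ^ k.-1).
have cq : c ^+ q = b / a by rewrite -exprM -expnSr prednK ?k_gt0 // frobL.
have E : 'X^q * a%:P + b%:P = a *: ('X + c%:P) ^+ q :> {poly L}.
  rewrite exprDn_pchar ?qnat_poly1 // -rmorphXn /= cq scalerDr -!mul_polyC mulrC.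
  by rewrite -polyCM [a * _]mulrC divfK.
rewrite E dvdpZr // => h; exfalso.
have cop' : coprimep fL (('X + c%:P) ^+ q).
  rewrite coprimep_expr //.
  have -> : 'X + c%:P = 'X - (- c)%:P by rewrite polyCN opprK.
  by rewrite coprimep_XsubC noroot.
move: h; rewrite -[_ ^+ q]mul1r (Gauss_dvdpl _ cop') dvdp1 szfL eqSS => /eqP n0.
by move: n_gt1; rewrite n0.
Qed.


Lemma gcd_kn : exists km kn, (km * k = kn * n + 1)%N.
Proof.
case: (egcdnP n k_gt0) => km kn Hk _; exists km, kn.
by move: cop; rewrite coprime_sym /coprime => /eqP <-.
Qed.

Lemma lemX (u w : L) :
  fL \Po ('X * u%:P + w%:P) = fL -> u ^+ q = u /\ w ^+ q = w.
Proof.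
set s := 'X * u%:P + w%:P => hs.
have hc m : fL %| s ^+ (q ^ (m * n)) - s.
  by have := dvdp_comp_poly s (fL_frobm m); rewrite hs comp_polyB comp_Xn_poly comp_polyX.
have [km [kn Hk]] := gcd_kn.
have EE : (q ^ (km * k) = q ^ (kn * n) * q)%N by rewrite Hk expnD expn1.
have s1 : s ^+ (q ^ (km * k)) = 'X^(q ^ (km * k)) * u%:P + w%:P.
  by rewrite exprDn_pchar ?qnat_poly // exprMn -!rmorphXn /= !frobL_pow.
have s2 : s ^+ q = 'X^q * (u ^+ q)%:P + (w ^+ q)%:P.
  by rewrite exprDn_pchar ?qnat_poly1 // exprMn -!rmorphXn.
have h1 : fL %| s ^+ (q ^ (km * k)) - s ^+ q by rewrite EE exprM dvd_pow // hc.
have h2 : fL %| 'X^(q ^ (km * k)) - 'X^q by rewrite EE exprM dvd_pow // fL_frobm.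
have h3 : fL %| 'X^q * (u - u ^+ q)%:P + (w - w ^+ q)%:P.
  have -> : 'X^q * (u - u ^+ q)%:P + (w - w ^+ q)%:P =
    (s ^+ (q ^ (km * k)) - s ^+ q) - ('X^(q ^ (km * k)) - 'X^q) * u%:P :> {poly L}.
    by rewrite s1 s2 mulrBl rmorphB /= mulrBr rmorphB /= (grp ('X^(q ^ (km * k)) * u%:P)).
  by rewrite dvdp_sub // dvdp_mulr.
have [/eqP] := indep h3; rewrite subr_eq0 => /eqP <- /eqP; rewrite subr_eq0 => /eqP <-.
by [].
Qed.

End Main.


Lemma coefXc_top (R : comNzRingType) (c : R) i : (('X + c%:P) ^+ i)`_i = 1.
Proof.
have -> : 'X + c%:P = 'X - (- c)%:P by rewrite polyCN opprK.
have /monicP := monic_exp i (monicXsubC (- c)).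
by rewrite lead_coefE size_exp_XsubC.
Qed.

Lemma coefXc_hi (R : comNzRingType) (c : R) i j : (i < j)%N -> (('X + c%:P) ^+ i)`_j = 0.
Proof.
have -> : 'X + c%:P = 'X - (- c)%:P by rewrite polyCN opprK.
by move=> lt; rewrite nth_default // size_exp_XsubC.
Qed.

Lemma coefXc_sub (R : comNzRingType) (c : R) i : (('X + c%:P) ^+ i.+1)`_i = c *+ i.+1.
Proof.
elim: i => [|i IH]; first by rewrite expr1 coefD coefX coefC /= add0r.
rewrite exprS mulrDl coefD coefXM coefCM /= IH coefXc_top mulr1.
by rewrite [c *+ i.+2]mulrS addrC.
Qed.

Lemma coef_comp_XaddC (R : comNzRingType) (p : {poly R}) m c :
  size p = m.+2 ->
  (p \Po ('X + c%:P))`_m = p`_m + (p`_m.+1 * c) *+ m.+1.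
Proof.
move=> sz; rewrite coef_comp_poly sz !big_ord_recr /= big1 ?add0r.
  by rewrite coefXc_top mulr1 coefXc_sub mulrnAr.
by move=> i _; rewrite coefXc_hi ?mulr0.
Qed.


Lemma frobM (F : finFieldType) (L : fieldExtType F) m :
  {tau : {rmorphism L -> L} | forall x, tau x = x ^+ (#|F| ^ m)}.
Proof.
pose f (x : L) := x ^+ (#|F| ^ m).
have fA : zmod_morphism f.
  move=> x y; rewrite /f.
  by have := exprDn_pchar (x - y) y (qnat L m); rewrite subrK => ->; rewrite addrK.
have fM : monoid_morphism f by split=> [|x y]; rewrite /f ?expr1n ?exprMn.
pose faM := GRing.isZmodMorphism.Build _ _ f fA.
pose fmM := GRing.isMonoidMorphism.Build _ _ f fM.
pose tau : {rmorphism L -> L} := HB.pack f faM fmM.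
by exists tau.
Qed.

Definition tpol (R : nzRingType) (a b : R) : {poly R} := 'X * a%:P + b%:P.

Lemma comp_t (R : comNzRingType) (a b c d : R) :
  tpol a b \Po tpol c d = tpol (c * a) (d * a + b).
Proof.
rewrite /tpol comp_polyD comp_polyM comp_polyX !comp_polyC mulrDl -mulrA.
by rewrite -!rmorphM /= -addrA -rmorphD.
Qed.

Lemma size_t (R : idomainType) (a b : R) : a != 0 -> size (tpol a b) = 2.
Proof.
by move=> an0; rewrite /tpol mulrC size_MXaddC polyC_eq0 (negbTE an0) size_polyC an0.
Qed.

Lemma lead_t (R : idomainType) (a b : R) : a != 0 -> lead_coef (tpol a b) = a.
Proof.
move=> an0; rewrite lead_coefE size_t //= /tpol coefD coefXM coefC /=. by rewrite coefC /= addr0.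
Qed.

End Aux.
Import Aux.


Theorem mainTheorem4 (F : finFieldType) (L : fieldExtType F)
    (n : nat) (f : {poly F}) (alpha beta : L) :
  (1 < n)%N -> coprime n (\dim {:L}) ->
  irreducible_poly f -> size f = n.+1 ->
  alpha != 0 ->
  let g := (map_poly (in_alg L) f) \Po ('X * alpha%:P + beta%:P) in
  (gen_field [seq g`_i | i <- iota 0 n.+1] = fullv)
    <-> (gen_field [:: alpha; beta] = fullv).
Proof.
move=> n1 cop irr szf an0 g.
set fL := map_poly (in_alg L) f.
have gE : g = fL \Po tpol alpha beta by [].
have szg : size g = n.+1 by rewrite gE size_comp_poly2 ?size_t // size_map_poly.
set cs := [seq g`_i | i <- iota 0 n.+1].
have gcs i : g`_i \in <<1 & cs>>%VS.
  case: (ltnP i n.+1) => hi.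
    by apply: seqv_sub_adjoin; apply/mapP; exists i => //; rewrite mem_iota.
  by rewrite nth_default ?szg // mem0v.
split => H.
  apply/eqP; rewrite eqEsubv subvf /= -H /gen_field.
  apply/Fadjoin_seqP; split; first exact: subv_adjoin_seq.
  move=> x /mapP [i _ ->].
  set E := <<1 & [:: alpha; beta]>>%AS.
  have : g \is a polyOver E.
    rewrite gE; apply: polyOver_comp; first exact: alg_polyOver.
    by rewrite /tpol rpredD ?rpredM ?polyOverX ?polyOverC // seqv_sub_adjoin ?inE ?eqxx ?orbT.
  by move/polyOverP.
set K := <<1 & cs>>%AS.
set e := \dim K.
have [tau tauE] := frobM L e.
have tauK x : x \in K -> tau x = x.
  by move=> xK; rewrite tauE; apply/eqP; rewrite -(Fermat's_little_theorem K).
have fL1 := polyOverP (alg_polyOver 1%AS f).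
have taug : map_poly tau g = g.
  by apply/polyP => i; rewrite coef_map /= tauK // gcs.
have taufL : map_poly tau fL = fL.
  by apply/polyP => i; rewrite coef_map /= tauK // (subvP (sub1v K)) // fL1.
set a' := tau alpha; set b' := tau beta.
have tauT : map_poly tau (tpol alpha beta) = tpol a' b'.
  by rewrite /tpol rmorphD rmorphM /= map_polyX !map_polyC.
have h01 : fL \Po tpol alpha beta = fL \Po tpol a' b'.
  by rewrite -tauT -[in RHS]taufL -map_comp_poly -gE taug.
set ai := alpha^-1.
set s0i := tpol ai (- (beta * ai)).
set u := ai * a'; set w := - (beta * ai) * a' + b'.
have c0 : tpol alpha beta \Po s0i = 'X.
  rewrite comp_t mulVf // mulNr -mulrA mulVf // mulr1 addNr /tpol.
  by rewrite polyC1 mulr1 polyC0 addr0.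
have c1 : tpol a' b' \Po s0i = tpol u w by rewrite comp_t.
have hS : fL \Po tpol u w = fL.
  by rewrite -c1 comp_polyA -h01 -comp_polyA c0 comp_polyXr.
have [uq wq] := lemX n1 cop irr szf hS.
have fix1 x m : x ^+ #|F| = x -> x ^+ (#|F| ^ m) = x.
  move=> hx; elim: m => [|m IH]; first by rewrite expr1.
  by rewrite expnSr exprM IH hx.
have tu : tau u = u by rewrite tauE fix1.
have tw : tau w = w by rewrite tauE fix1.
have an0' : a' != 0 by rewrite /a' tauE expf_neq0.
have ai0 : ai != 0 by rewrite invr_eq0.
have un0 : u != 0 by rewrite mulf_neq0.
have ha : a' = alpha * u by rewrite /u mulrA mulfV // mul1r.
have hb : b' = u * beta + w.
  rewrite /w /u mulNr [beta * ai]mulrC -mulrA -[ai * beta * a']mulrA [beta * a']mulrC.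
  by rewrite addrA subrr add0r.
have ia i : alpha ^+ (#|F| ^ (e * i)) = alpha * u ^+ i.
  elim: i => [|i IH]; first by rewrite muln0 expr1 expr0 mulr1.
  by rewrite mulnSr expnD exprM IH -tauE rmorphM rmorphXn /= tu -/a' ha -mulrA -exprS.
have uk : u ^+ \dim {:L} = 1.
  have := ia (\dim {:L}); rewrite frobL_pow -{1}[alpha]mulr1.
  by move/(mulfI an0).
have lcn0 : lead_coef fL != 0.
  by rewrite lead_coef_eq0 -size_poly_eq0 size_map_poly szf.
have un : u ^+ n = 1.
  have := congr1 lead_coef hS; rewrite lead_coef_comp ?size_t // lead_t //.
  rewrite size_map_poly szf /= -{2}[lead_coef fL]mulr1.
  by move/(mulfI lcn0).
have [km [kn Hk]] := gcd_kn cop.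
have u1 : u = 1.
  have := congr1 (fun m => u ^+ m) Hk; rewrite /= exprD expr1 [(km * _)%N]mulnC [(kn * _)%N]mulnC.
  by rewrite !exprM uk un !expr1n mul1r.
have hb1 : b' = beta + w by rewrite hb u1 mul1r.
have ib i : beta ^+ (#|F| ^ (e * i)) = beta + w *+ i.
  elim: i => [|i IH]; first by rewrite muln0 expr1 mulr0n addr0.
  by rewrite mulnSr expnD exprM IH -tauE rmorphD rmorphMn /= tw -/b' hb1 -addrA -mulrS.
have wk : w *+ \dim {:L} = 0.
  have := ib (\dim {:L}); rewrite frobL_pow -{1}[beta]addr0.
  by move/addrI.
have [m nm] : exists m, n = m.+1 by exists n.-1; rewrite prednK // ltnW.
have wn : w *+ n = 0.
  have := congr1 (fun p : {poly L} => p`_m) hS.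
  rewrite /= {1}/tpol u1 polyC1 mulr1 coef_comp_XaddC; last by rewrite size_map_poly szf nm.
  rewrite -{2}[fL`_m]addr0 => /addrI /eqP; rewrite -mulrnAr mulf_eq0 -nm => /orP [|/eqP //].
  move=> /eqP h; move: lcn0; rewrite lead_coefE size_map_poly szf /= -/fL h eqxx.
  by [].
have w0 : w = 0.
  have := congr1 (fun j => w *+ j) Hk; rewrite /= mulrnDr [(km * _)%N]mulnC [(kn * _)%N]mulnC.
  by rewrite !mulrnA wk wn !mul0rn add0r.
have aK : alpha \in K.
  by rewrite (Fermat's_little_theorem K) -tauE -/a' ha u1 mulr1.
have bK : beta \in K.
  by rewrite (Fermat's_little_theorem K) -tauE -/b' hb1 w0 addr0.
apply/eqP; rewrite eqEsubv subvf /= -H /gen_field.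
apply/Fadjoin_seqP; split; first exact: sub1v.
by move=> x; rewrite !inE => /orP [] /eqP ->.
Qed.
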